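(* There is an absolute constant $c>0$ such that the following holds. Let $G$ be a finite simple graph with maximum degree $d\ge 1$, and let $D(G)$ be a straight-line drawing of $G$ in the base plane $\mathcal{P}_1=\{z=0\}\subset\mathbb{R}^3$ with arbitrary but distinct vertex positions (no assumption on the angular resolution of $D(G)$). Then there is a 3D arc diagram drawing of $G$ with base plane $\mathcal{P}_1$ and with the same vertex positions as $D(G)$ whose angular resolution is at least $c/d$.
   Context: A 3D arc diagram drawing of $G$ with base plane $\mathcal{P}_1=\{z=0\}$ is a placement of the vertices at distinct points of $\mathcal{P}_1$, together with, for each edge $e=(a,b)$, a circular arc (a contiguous subset of a circle; a straight segment is allowed as the degenerate case) with endpoints at the positions of $a$ and $b$, such that: the arc lies in the plane $\mathcal{P}_2$ containing the segment $ab$ and perpendicular to $\mathcal{P}_1$ (so the arc projects perpendicularly onto the segment $ab$ in $\mathcal{P}_1$); all arcs lie in the closed half-space $z\ge 0$; and the arc forms the same angle $\alpha_e\in[0,\pi/2]$ with the segment $ab$ at both of its endpoints. The angle between two arcs incident to a common vertex $v$ is the angle in $[0,\pi]$ between their tangent rays at $v$ (directed into the arcs). The angular resolution of the drawing is the minimum of this angle over all vertices $v$ and all pairs of distinct edges incident to $v$. *)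

(* Defs.v *)
From mathcomp Require Import all_boot.
From Stdlib Require Import Reals.

Set Implicit Arguments.
Unset Strict Implicit.
Unset Printing Implicit Defensive.

Definition simple_graph (T : finType) (e : rel T) : Prop :=
  symmetric e /\ irreflexive e.

Definition degree (T : finType) (e : rel T) (v : T) : nat :=
  #|[pred u | e v u]|.

Definition max_degree (T : finType) (e : rel T) : nat :=
  (\max_(v : T) degree e v)%N.

Local Open Scope R_scope.

(* Points of R^3 as triples; vertex positions lie in P1 = {z = 0}, given
   by their (x,y)-coordinates  pos : T -> R * R. *)
Definition R3 := (R * R * R)%type.

Definition dot3 (p q : R3) : R :=
  let '(x1, y1, z1) := p in let '(x2, y2, z2) := q in x1 * x2 + y1 * y2 + z1 * z2.

Definition norm3 (p : R3) : R := sqrt (dot3 p p).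

Definition vangle (p q : R3) : R := acos (dot3 p q / (norm3 p * norm3 q)).

(* A 3D arc diagram drawing with base plane P1 and vertex positions pos is
   determined by the angle alpha_e in [0, pi/2] of each edge e = {a,b}: the arc
   of e is the unique circular arc (segment if alpha_e = 0) in the vertical
   plane through ab, in the half-space z >= 0, meeting ab at angle alpha_e at
   both ends.  We record alpha as a function T -> T -> R that must be symmetric
   on edges (one arc per edge). *)
Definition arc_diagram (T : finType) (e : rel T) (alpha : T -> T -> R) : Prop :=
  forall a b, e a b -> alpha a b = alpha b a /\ 0 <= alpha a b <= PI / 2.

(* Tangent direction, at the endpoint v, of the arc of edge {v,u} with angle
   al, directed into the arc: it lies in the vertical plane through
   pos v, pos u, makes angle al with the direction from pos v to pos u, and
   points upward (z >= 0). *)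
Definition arc_tangent (T : Type) (pos : T -> R * R) (v u : T) (al : R) : R3 :=
  let dx := fst (pos u) - fst (pos v) in
  let dy := snd (pos u) - snd (pos v) in
  let L := sqrt (dx * dx + dy * dy) in
  (cos al * (dx / L), cos al * (dy / L), sin al).

Definition arc_angle (T : Type) (pos : T -> R * R) (alpha : T -> T -> R)
  (v u w : T) : R :=
  vangle (arc_tangent pos v u (alpha v u)) (arc_tangent pos v w (alpha v w)).

Definition ang_res_at_least (T : finType) (e : rel T) (pos : T -> R * R)
  (alpha : T -> T -> R) (r : R) : Prop :=
  forall v u w : T, e v u -> e v w -> u <> w -> r <= arc_angle pos alpha v u w.

(* Main.v *)
Require Import Defs.
From mathcomp Require Import all_boot zify.
From Stdlib Require Import Reals Lra Psatz.

Lemma free_color (l : seq nat) (n : nat) : size l < n -> exists2 k, k < n & k \notin l.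
Proof.
move=> Hs; case: (boolP (all (fun k => k \in l) (iota 0 n))).
  move/allP => H; have := uniq_leq_size (iota_uniq 0 n) H.
  by rewrite size_iota => Hn; move: Hs; rewrite ltnNge Hn.
by case/allPn => k; rewrite mem_iota add0n => /andP [_ Hk] Hn; exists k.
Qed.

Section Col.
Variables (T : finType) (e : rel T) (d : nat).
Hypotheses (esym : symmetric e) (eirr : irreflexive e) (edeg : forall v, degree e v <= d).

Definition Ps (s : seq (T * T)) x y := e x y && (((x, y) \in s) || ((y, x) \in s)).

Lemma Ps_sym s x y : Ps s x y = Ps s y x.
Proof. by rewrite /Ps esym orbC. Qed.

Lemma Ps_lt s a b : Ps s a b = false -> e a b -> #|[pred x | Ps s a x]| < d.
Proof.
move=> Hab eab.
apply: (@leq_trans #|[pred x | e a x]|); last exact: edeg.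
apply: proper_card; apply/properP; split.
  by apply/subsetP => x; rewrite !inE /Ps => /andP [].
by exists b; rewrite !inE ?Hab.
Qed.

Lemma col_s s : exists c : T -> T -> nat,
  (forall a b, Ps s a b -> c a b = c b a /\ c a b < 2 * d) /\
  (forall v u w, Ps s v u -> Ps s v w -> u <> w -> c v u <> c v w).
Proof.
elim: s => [|[a b] s [c [Hc1 Hc2]]].
  by exists (fun _ _ => 0); split => [a b|v u w]; rewrite /Ps !in_nil andbF.
case: (boolP (Ps s a b || ~~ e a b)) => Hcase.
  have EP : forall x y, Ps ((a, b) :: s) x y = Ps s x y.
    move=> x y; rewrite /Ps !in_cons.
    case exy: (e x y) => //=.
    case/orP: Hcase => [Pab | neab].
      case: (eqVneq (x, y) (a, b)) => [[-> ->]|_] /=; first by move: Pab; rewrite /Ps => /andP [].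
      case: (eqVneq (y, x) (a, b)) => [[-> ->]|_] /=; last by [].
      by move: Pab; rewrite /Ps => /andP [_ /orP [->|->]]; rewrite ?orbT.
    case: (eqVneq (x, y) (a, b)) => [[ex ey]|_] /=.
      by move: neab; rewrite -ex -ey exy.
    case: (eqVneq (y, x) (a, b)) => [[ey ex]|_] //=.
    by move: neab; rewrite -ex -ey esym exy.
  by exists c; split => [a' b'|v u w]; rewrite ?EP; [apply: Hc1|apply: Hc2].
move: Hcase; rewrite negb_or negbK => /andP [/negbTE nPab eab].
have nPba : Ps s b a = false by rewrite Ps_sym.
set l := map (c a) (enum [pred x | Ps s a x]) ++ map (c b) (enum [pred x | Ps s b x]).
have Hl : size l < 2 * d.
  rewrite size_cat !size_map -!cardE.
  have eba : e b a by rewrite esym.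
  have := Ps_lt _ _ _ nPab eab; have := Ps_lt _ _ _ nPba eba.
  move=> H1 H2; rewrite mul2n -addnn -addSn; exact: leq_add H2 (ltnW H1).
have [k Hk Hkl] := free_color _ _ Hl.
have ab : a != b by apply/eqP => E; move: eab; rewrite E eirr.
have inl1 : forall x, Ps s a x -> c a x \in l.
  by move=> x Hx; rewrite mem_cat; apply/orP; left; apply: map_f; rewrite mem_enum.
have inl2 : forall x, Ps s b x -> c b x \in l.
  by move=> x Hx; rewrite mem_cat; apply/orP; right; apply: map_f; rewrite mem_enum.
pose cnd x y := ((x == a) && (y == b)) || ((x == b) && (y == a)).
have cndC : forall x y, cnd x y = cnd y x by move=> x y; rewrite /cnd orbC andbC [X in _ || X]andbC.
have EP : forall x y, Ps ((a, b) :: s) x y = Ps s x y || cnd x y.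
  move=> x y.
  have cndE : cnd x y -> e x y.
    by case/orP => /andP [/eqP -> /eqP ->]; rewrite ?eab // esym.
  rewrite /Ps !in_cons !xpair_eqE.
  case Hc: (cnd x y).
    rewrite orbT (cndE Hc) /=.
    by move: Hc; rewrite /cnd; case/orP => /andP [-> ->]; rewrite /= ?andbT ?orbT.
  rewrite orbF; move: Hc; rewrite /cnd => /norP [/negbTE A /negbTE B].
  by rewrite A [(y == a) && _]andbC B.
exists (fun x y => if cnd x y then k else c x y); split.
  move=> x y; rewrite EP -(cndC x y); case Hxy: (cnd x y) => /=; first by [].
  by rewrite orbF => P; have [E1 E2] := Hc1 _ _ P.
move=> v u w; rewrite !EP => Pu Pw uw.
case Cu: (cnd v u); case Cw: (cnd v w); move: Pu Pw; rewrite Cu Cw ?orbF => Pu Pw.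
- exfalso; apply: uw.
  move: Cu Cw; rewrite /cnd => /orP [/andP [/eqP Hv /eqP Hu]|/andP [/eqP Hv /eqP Hu]]
     /orP [/andP [/eqP Hv' /eqP Hw]|/andP [/eqP Hv' /eqP Hw]];
  first [by rewrite Hu Hw | by move: ab; rewrite -Hv -Hv' eqxx | by move: ab; rewrite -Hv -Hv' eqxx].
- move: Cu; rewrite /cnd => /orP [/andP [/eqP Ev _]|/andP [/eqP Ev _]];
  move: Pw; rewrite Ev => Pw E.
    by move: Hkl; rewrite E (inl1 _ Pw).
  by move: Hkl; rewrite E (inl2 _ Pw).
- move: Cw; rewrite /cnd => /orP [/andP [/eqP Ev _]|/andP [/eqP Ev _]];
  move: Pu; rewrite Ev => Pu E.
    by move: Hkl; rewrite -E (inl1 _ Pu).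
  by move: Hkl; rewrite -E (inl2 _ Pu).
- exact: Hc2.
Qed.

End Col.
Open Scope R_scope.

Lemma unit2 (x y : R) : 0 < x*x+y*y ->
  let L := sqrt (x*x+y*y) in (x/L)*(x/L) + (y/L)*(y/L) = 1.
Proof.
move=> H L.
have HL : L * L = x*x+y*y by rewrite /L sqrt_sqrt; lra.
have L0 : L <> 0 by move=> E; rewrite E in HL; lra.
transitivity ((x*x+y*y)/(L*L)); [field; exact L0|rewrite HL; field; lra].
Qed.

Lemma norm_tan (x y a : R) : 0 < x*x+y*y ->
  let L := sqrt (x*x+y*y) in norm3 (cos a * (x/L), cos a * (y/L), sin a) = 1.
Proof.
move=> H L; rewrite /norm3 /dot3.
have U := unit2 x y H; cbv zeta in U; rewrite -/L in U.
have -> : cos a * (x / L) * (cos a * (x / L)) + cos a * (y / L) * (cos a * (y / L)) +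
  sin a * sin a = (cos a)^2 * ((x/L)*(x/L) + (y/L)*(y/L)) + (sin a)^2 by ring.
rewrite U Rmult_1_r.
have := sin2_cos2 a; rewrite /Rsqr => E.
have -> : cos a ^ 2 + sin a ^ 2 = 1 by lra.
exact sqrt_1.
Qed.

Lemma key (x1 y1 x2 y2 a1 a2 : R) : 0 < x1*x1+y1*y1 -> 0 < x2*x2+y2*y2 ->
  0 <= a1 <= PI/2 -> 0 <= a2 <= PI/2 ->
  let L1 := sqrt (x1*x1+y1*y1) in let L2 := sqrt (x2*x2+y2*y2) in
  Rabs (a1 - a2) <= vangle (cos a1 * (x1/L1), cos a1 * (y1/L1), sin a1)
                          (cos a2 * (x2/L2), cos a2 * (y2/L2), sin a2).
Proof.
move=> H1 H2 Ha1 Ha2 L1 L2.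
rewrite /vangle (norm_tan _ _ _ H1) (norm_tan _ _ _ H2) Rmult_1_r.
have U1 := unit2 x1 y1 H1; have U2 := unit2 x2 y2 H2. cbv zeta in U1, U2; rewrite -/L1 in U1; rewrite -/L2 in U2.
rewrite /dot3.
set p := x1 / L1 * (x2 / L2) + y1 / L1 * (y2 / L2).
have Hp : -1 <= p <= 1.
  rewrite /p; move: U1 U2; set u1 := x1/L1; set v1 := y1/L1; set u2 := x2/L2; set v2 := y2/L2 => U1 U2.
  have := Rle_0_sqr (u1-u2); have := Rle_0_sqr (v1-v2); have := Rle_0_sqr (u1+u2); have := Rle_0_sqr (v1+v2).
  rewrite /Rsqr; split; nra.
have c1 : 0 <= cos a1 by apply cos_ge_0; lra.
have c2 : 0 <= cos a2 by apply cos_ge_0; lra.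
have s1 : 0 <= sin a1 by apply sin_ge_0; lra.
have s2 : 0 <= sin a2 by apply sin_ge_0; lra.
have c1' : cos a1 <= 1 by have := COS_bound a1; lra.
have c2' : cos a2 <= 1 by have := COS_bound a2; lra.
have s1' : sin a1 <= 1 by have := SIN_bound a1; lra.
have s2' : sin a2 <= 1 by have := SIN_bound a2; lra.
set D := _ + _ + _.
have -> : D / 1 = D by field.
have HD : D = cos a1 * cos a2 * p + sin a1 * sin a2 by rewrite /D /p; ring.
clearbody D p.
have cc : 0 <= cos a1 * cos a2 by apply Rmult_le_pos.
have Hc : D <= cos (a1 - a2) by rewrite cos_minus HD; nra.
have Hlo : -1 <= D.
  rewrite HD.
  have := sin2_cos2 a1; have := sin2_cos2 a2; rewrite /Rsqr => E1 E2; nra.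
have Hhi : D <= 1 by have := COS_bound (a1 - a2); lra.
have Hab : 0 <= Rabs (a1 - a2) <= PI.
  split; [apply Rabs_pos|]; have := PI_RGT_0; unfold Rabs; destruct Rcase_abs; lra.
have HcA : cos (Rabs (a1 - a2)) = cos (a1 - a2).
  unfold Rabs; destruct Rcase_abs => //; exact: cos_neg.
apply Rnot_lt_le => Hlt.
have := acos_bound D => Hb.
have := cos_decreasing_1 _ _ (proj1 Hb) (proj2 Hb) (proj1 Hab) (proj2 Hab) Hlt.
rewrite cos_acos; [|lra]. rewrite HcA. lra.
Qed.

Lemma INR_sep (m n : nat) : m <> n -> 1 <= Rabs (INR m - INR n).
Proof.
move=> mn; case: (ltngtP m n) => H.
- have : INR m.+1 <= INR n by apply le_INR; apply/leP.
  rewrite S_INR => H'; rewrite Rabs_left1; lra.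
- have : INR n.+1 <= INR m by apply le_INR; apply/leP.
  rewrite S_INR => H'; rewrite Rabs_right; lra.
- by case: mn.
Qed.

Close Scope R_scope.

Theorem theorem2 :
  exists c : R, (0 < c)%R /\
  forall (T : finType) (e : rel T), simple_graph e ->
  forall d : nat, max_degree e = d -> (1 <= d)%N ->
  forall pos : T -> R * R, injective pos ->
  exists alpha : T -> T -> R,
    arc_diagram e alpha /\ ang_res_at_least e pos alpha (c / INR d)%R.
Proof.
exists (PI / 4)%R; split; first by have := PI_RGT_0; lra.
move=> T e [esym eirr] d Hd d1 pos pinj.
have edeg : forall v, (degree e v <= d)%N.
  by move=> v; rewrite -Hd /max_degree; apply: leq_bigmax.
have [c [Hc1 Hc2]] := col_s _ _ _ esym eirr edeg (enum (predT : pred (T * T))).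
have EP : forall x y, Ps T e (enum predT) x y = e x y. move=> x y; rewrite /Ps; case: (e x y) => //=; by rewrite mem_enum.
have dpos : (0 < INR d)%R by apply lt_0_INR; apply/ltP.
have PIpos := PI_RGT_0.
set q := (PI / (4 * INR d))%R.
have qpos : (0 < q)%R by rewrite /q; apply Rdiv_lt_0_compat; lra.
have Hq : (q * (2 * INR d) = PI / 2)%R by rewrite /q; field; lra.
set alpha := fun a b => (INR (c a b) * q)%R.
have Hal : arc_diagram e alpha.
  move=> a b eab; have P : Ps T e (enum predT) a b by rewrite EP.
  have [E1 E2] := Hc1 a b P.
  split; first by rewrite /alpha E1.
  have Hle : (INR (c a b) <= 2 * INR d)%R.
    replace (2 * INR d)%R with (INR (2 * d)); last by rewrite mult_INR.
    by apply le_INR; apply/leP; apply: ltnW.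
  have := pos_INR (c a b); rewrite /alpha; split; nra.
exists alpha; split => // v u w evu evw uw.
have posd : forall x, e v x -> (0 < (fst (pos x) - fst (pos v)) * (fst (pos x) - fst (pos v))
     + (snd (pos x) - snd (pos v)) * (snd (pos x) - snd (pos v)))%R.
  move=> x ex; have xv : x <> v by move=> E; move: ex; rewrite E eirr.
  apply Rnot_le_lt => H; apply xv; apply pinj.
  move: H; case: (pos x) => px py; case: (pos v) => qx qy /= H.
  have := Rle_0_sqr (px-qx); have := Rle_0_sqr (py-qy); rewrite /Rsqr => S1 S2.
  have E1 : ((px - qx) * (px - qx) = 0)%R by lra.
  have E2 : ((py - qy) * (py - qy) = 0)%R by lra.
  have F1 : (px - qx = 0)%R by case: (Rmult_integral _ _ E1).
  have F2 : (py - qy = 0)%R by case: (Rmult_integral _ _ E2).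
  have -> : px = qx by lra.
  by have -> : py = qy by lra.
have [_ Ha1] := Hal v u evu.
have [_ Ha2] := Hal v w evw.
have K := key _ _ _ _ _ _ (posd u evu) (posd w evw) Ha1 Ha2.
rewrite /arc_angle /arc_tangent.
apply: Rle_trans K.
have Pu : Ps T e (enum predT) v u by rewrite EP.
have Pw : Ps T e (enum predT) v w by rewrite EP.
have Hs := INR_sep _ _ (Hc2 v u w Pu Pw uw).
rewrite /alpha -Rmult_minus_distr_r Rabs_mult (Rabs_right q); last lra.
have -> : (PI / 4 / INR d = 1 * q)%R by rewrite /q; field; lra.
by apply Rmult_le_compat_r; lra.
Qed.
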